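(* Let $\mathbb N^n$ be the free commutative monoid on generators $a_1,\dots,a_n$, let $T^n\subset\mathbb N^n$ be the set of products $a_{i_1}a_{i_2}\cdots a_{i_k}$ with $1\leqslant i_1<\dots<i_k\leqslant n$ (including the empty product $1$), and let $\mathfrak FT^n$ be the full subcategory of $\mathfrak F\mathbb N^n$ with object set $T^n$. Then the inclusion $\mathfrak FT^n\subset\mathfrak F\mathbb N^n$ is strong coinitial.
   Context: For a monoid $M$, $\mathfrak FM$ has objects the elements of $M$ and morphisms $\alpha\to\beta$ the pairs $(f,g)$ with $g\alpha f=\beta$; composition $(f_2,g_2)\circ(f_1,g_1)=(f_1f_2,g_2g_1)$. A functor $S:\mathcal C\to\mathcal D$ of small categories is strong coinitial if for every object $d$ the comma category $S/d$ (objects $(c,\alpha:S(c)\to d)$; morphisms $f:c_1\to c_2$ with $\alpha_2\circ S(f)=\alpha_1$) is connected and satisfies $\varinjlim{}_q^{S/d}\Delta\mathbb Z=0$ for $q>0$, where $\Delta\mathbb Z$ is the constant functor with value $\mathbb Z$ and $\varinjlim{}_q$ the left derived functors of the colimit. *)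

(* Defs.v *)
From HB Require Import structures.
From mathcomp Require Import all_boot all_order all_algebra.
From Stdlib Require Import Relation_Operators.
Set Implicit Arguments. Unset Strict Implicit. Unset Printing Implicit Defensive.
Import GRing.Theory Num.Theory.

(** A category is given by carriers [Ob], [Mor] (with decidable equality),
   predicates [isOb]/[isMor] selecting the actual objects/morphisms inside the
   carriers, source/target maps, identities and composition
   ([comp g f] = g o f, meaningful when [tgt f = src g]). *)
Record cat := Cat {
  Ob : eqType; Mor : eqType;
  isOb : pred Ob; isMor : pred Mor;
  src : Mor -> Ob; tgt : Mor -> Ob;
  idm : Ob -> Mor; comp : Mor -> Mor -> Mor }.

Record functor (C D : cat) := Functor {
  fobj : Ob C -> Ob D; fmor : Mor C -> Mor D }.

Definition full_sub (C : cat) (P : pred (Ob C)) : cat :=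
  @Cat (Ob C) (Mor C) (fun x => @isOb C x && P x)
       (fun m => [&& @isMor C m, @isOb C (@src C m), @isOb C (@tgt C m),
                     P (@src C m) & P (@tgt C m)])
       (@src C) (@tgt C) (@idm C) (@comp C).

Definition incl (C : cat) (P : pred (Ob C)) : functor (full_sub P) C :=
  @Functor (full_sub P) C id id.

(** Comma category S/d: objects (c, a : S c -> d); morphisms f : c1 -> c2 with
    a2 o S f = a1.  A morphism is stored as ((source, target), f). *)
Section Comma.
Variables (C D : cat) (S : functor C D) (d : Ob D).

Definition comma_isOb (p : Ob C * Mor D) : bool :=
  [&& @isOb C p.1, @isMor D p.2, @src D p.2 == @fobj _ _ S p.1 & @tgt D p.2 == d].

Definition comma_isMor (m : (Ob C * Mor D) * (Ob C * Mor D) * Mor C) : bool :=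
  [&& comma_isOb m.1.1, comma_isOb m.1.2, @isMor C m.2,
      @src C m.2 == m.1.1.1, @tgt C m.2 == m.1.2.1 &
      @comp D m.1.2.2 (@fmor _ _ S m.2) == m.1.1.2].

Definition comma : cat :=
  @Cat ((Ob C * Mor D)%type : eqType)
       (((Ob C * Mor D) * (Ob C * Mor D) * Mor C)%type : eqType)
       comma_isOb comma_isMor
       (fun m => m.1.1) (fun m => m.1.2)
       (fun x => ((x, x), @idm C x.1))
       (fun g f => ((f.1.1, g.1.2), @comp C g.2 f.2)).
End Comma.

Definition connected (C : cat) : Prop :=
  (exists x, @isOb C x) /\
  forall x y, @isOb C x -> @isOb C y ->
    clos_refl_sym_trans (Ob C)
      (fun a b => exists m, [/\ @isMor C m, @src C m = a & @tgt C m = b]) x y.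

(** * Left derived functors of colim applied to the constant functor Z,
    computed by the standard (simplicial replacement / nerve) complex:
    colim_q^C (Delta Z) = H_q (Z[N_* C], sum_i (-1)^i d_i).
    A q-simplex of the nerve is (x0, [:: m1; ...; mq]) with
    x0 -m1-> x1 -m2-> ... -mq-> xq. *)
Section Nerve.
Variable C : cat.

Definition simplex := (Ob C * seq (Mor C))%type.

Fixpoint composable (x : Ob C) (ms : seq (Mor C)) : bool :=
  if ms is m :: r then [&& @isMor C m, @src C m == x & composable (@tgt C m) r]
  else true.

Definition is_simplex (q : nat) (s : simplex) : bool :=
  [&& @isOb C s.1, size s.2 == q & composable s.1 s.2].

Definition face (i : nat) (s : simplex) : simplex :=
  let: (x0, ms) := s in
  if i == 0 then (if ms is m :: r then (@tgt C m, r) else s)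
  else if i == size ms then (x0, take i.-1 ms)
  else match drop i.-1 ms with
       | a :: b :: r => (x0, take i.-1 ms ++ @comp C b a :: r)
       | _ => s end.

Definition chain := seq (simplex * int).

Definition coef (c : chain) (s : simplex) : int :=
  (\sum_(p <- c | p.1 == s) p.2)%R.

Definition bd (c : chain) : chain :=
  flatten [seq (if p.1.2 is [::] then [::]
                else [seq (face i p.1, ((-1) ^+ i * p.2)%R)
                     | i <- iota 0 (size p.1.2).+1]) | p <- c].

Definition is_chain (q : nat) (c : chain) : bool :=
  all (is_simplex q) (map fst c).

Definition colim_derived_const_Z_vanishes (q : nat) : Prop :=
  forall c : chain, is_chain q c -> (forall s, coef (bd c) s = 0%R) ->
    exists b : chain, is_chain q.+1 b /\ forall s, coef (bd b) s = coef c s.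
End Nerve.

Definition strong_coinitial (C D : cat) (S : functor C D) : Prop :=
  forall d, @isOb D d ->
    connected (comma S d) /\
    forall q, 0 < q -> colim_derived_const_Z_vanishes (comma S d) q.

(** Elements of N^n are exponent vectors {ffun 'I_n -> nat}; the product is
   pointwise addition, unit is 0, generator a_i is the i-th unit vector. *)
Section FreeMonoid.
Variable n : nat.
Definition Nn := {ffun 'I_n -> nat}.
Definition mulN (x y : Nn) : Nn := [ffun i => x i + y i].
Definition oneN : Nn := [ffun => 0%N].
Definition gen (i : 'I_n) : Nn := [ffun j => nat_of_bool (j == i)].

Definition inT (x : Nn) : bool :=
  [exists A : {set 'I_n}, x == \big[mulN/oneN]_(i in A) gen i].

(* morphism (alpha, beta, f, g) : alpha -> beta with g alpha f = beta;
   composition (f2,g2) o (f1,g1) = (f1 f2, g2 g1) *)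
Definition FN : cat :=
  @Cat (Nn : eqType) ((Nn * Nn * Nn * Nn)%type : eqType)
    predT (fun m => m.1.1.2 == mulN (mulN m.2 m.1.1.1) m.1.2)
    (fun m => m.1.1.1) (fun m => m.1.1.2)
    (fun x => (x, x, oneN, oneN))
    (fun m2 m1 => (m1.1.1.1, m2.1.1.2, mulN m1.1.2 m2.1.2, mulN m2.2 m1.2)).

Definition FT : cat := full_sub (C:=FN) inT.
End FreeMonoid.

(* Main.v *)
Require Import Defs.
From mathcomp Require Import all_boot all_order all_algebra.
From mathcomp Require Import ring zify.
From Stdlib Require Import Relation_Operators.
Set Implicit Arguments. Unset Strict Implicit. Unset Printing Implicit Defensive.

Module G1.
Import GRing.Theory Num.Theory.
Local Open Scope ring_scope.

Definition pr {A : Type} (c : seq (A * int)) (g : A -> int) : int :=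
  \sum_(p <- c) p.2 * g p.1.

Lemma pr_cat A (c1 c2 : seq (A*int)) g : pr (c1 ++ c2) g = pr c1 g + pr c2 g.
Proof. by rewrite /pr big_cat. Qed.
Lemma pr_nil A (g : A -> int) : pr [::] g = 0.
Proof. by rewrite /pr big_nil. Qed.
Lemma pr_cons A (p : A * int) c g : pr (p :: c) g = p.2 * g p.1 + pr c g.
Proof. by rewrite /pr big_cons. Qed.
Lemma pr_ext (A : eqType) (c : seq (A*int)) g1 g2 :
  (forall p, p \in c -> g1 p.1 = g2 p.1) -> pr c g1 = pr c g2.
Proof.
move=> H; rewrite /pr; apply: eq_big_seq => p /H ->; done.
Qed.

Definition negC {A} (c : seq (A * int)) := [seq (p.1, - p.2) | p <- c].
Lemma pr_neg A (c : seq (A*int)) g : pr (negC c) g = - pr c g.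
Proof.
rewrite /pr big_map -sumrN; apply: eq_bigr => p _ /=; by rewrite mulNr.
Qed.

Definition Lin {A B : Type} (Phi : A -> seq (B * int)) (c : seq (A * int)) :=
  flatten [seq [seq (u.1, p.2 * u.2) | u <- Phi p.1] | p <- c].

Lemma pr_Lin A B (Phi : A -> seq (B*int)) c g :
  pr (Lin Phi c) g = pr c (fun t => pr (Phi t) g).
Proof.
rewrite /pr /Lin big_flatten /= big_map; apply: eq_bigr => p _.
rewrite big_map mulr_sumr; apply: eq_bigr => u _ /=; by rewrite mulrA.
Qed.

Lemma pr_coef (A : eqType) (c : seq (A * int)) s :
  \sum_(p <- c | p.1 == s) p.2 = pr c (fun t => (t == s)%:R).
Proof.
rewrite /pr big_mkcond; apply: eq_bigr => p _; by case: eqP; rewrite ?mulr1 ?mulr0.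
Qed.

Lemma pr_via (A : eqType) (c : seq (A*int)) (U : seq A) g :
  uniq U -> {subset map fst c <= U} ->
  pr c g = \sum_(t <- U) (\sum_(p <- c | p.1 == t) p.2) * g t.
Proof.
move=> uU sub.
under eq_bigr => t _ do rewrite big_mkcond mulr_suml.
rewrite exchange_big /pr; apply: eq_big_seq => p pc.
have pU : p.1 \in U by apply: sub; apply: map_f.
rewrite (bigD1_seq p.1) //= eqxx big1 ?addr0 // => t; rewrite eq_sym.
by move/negbTE => ->; rewrite mul0r.
Qed.

Lemma pr_equiv (A : eqType) (c1 c2 : seq (A*int)) :
  (forall s, \sum_(p <- c1 | p.1 == s) p.2 = \sum_(p <- c2 | p.1 == s) p.2) ->
  forall g, pr c1 g = pr c2 g.
Proof.
move=> H g; set U := undup (map fst c1 ++ map fst c2).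
have uU : uniq U by apply: undup_uniq.
rewrite (@pr_via _ c1 U) //; last by move=> x xc; rewrite mem_undup mem_cat xc.
rewrite (@pr_via _ c2 U) //; last by move=> x xc; rewrite mem_undup mem_cat xc orbT.
by apply: eq_bigr => t _; rewrite H.
Qed.

Lemma pr_sub A (c : seq (A*int)) f1 f2 :
  pr c (fun t => f1 t - f2 t) = pr c f1 - pr c f2.
Proof. rewrite /pr -sumrB; apply: eq_bigr => p _; by rewrite mulrBr. Qed.
Lemma pr_add A (c : seq (A*int)) f1 f2 :
  pr c (fun t => f1 t + f2 t) = pr c f1 + pr c f2.
Proof. rewrite /pr -big_split; apply: eq_bigr => p _; by rewrite mulrDr. Qed.
Lemma pr_fext A (c : seq (A*int)) f1 f2 :
  f1 =1 f2 -> pr c f1 = pr c f2.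
Proof. move=> H; rewrite /pr; apply: eq_bigr => p _; by rewrite H. Qed.

Lemma all_Lin (A : eqType) B (a : pred B) (Phi : A -> seq (B*int)) c :
  (forall p, p \in c -> all a (map fst (Phi p.1))) -> all a (map fst (Lin Phi c)).
Proof.
elim: c => [//|p c IH] H; rewrite /Lin /= map_cat all_cat -map_comp /=.
rewrite (_ : [seq (fst \o _) i | i <- _] = map fst (Phi p.1)); last first.
  by apply: eq_map.
by rewrite H ?mem_head // IH // => p' pc; apply: H; rewrite in_cons pc orbT.
Qed.

End G1.
Import G1.

Module G2.
Import GRing.Theory Num.Theory.
Local Open Scope ring_scope.

Section ListLevel.
Variable T : Type.

Fixpoint rem_at (i : nat) (X : seq T) : seq T :=
  match X with
  | [::] => [::]
  | x :: X' => if i is j.+1 then x :: rem_at j X' else X'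
  end.

Definition bdA (X : seq T) : seq (seq T * int) :=
  [seq (rem_at i X, (-1) ^+ i) | i <- iota 0 (size X)].



Lemma pr_bdA_cons y Y g :
  pr (bdA (y :: Y)) g = g Y - pr (bdA Y) (fun Z => g (y :: Z)).
Proof.
rewrite /bdA /= pr_cons /= expr0 mul1r; congr (_ + _).
rewrite -(addn0 1%N) iotaDl -map_comp /pr !big_map -sumrN.
apply: eq_bigr => i _ /=; by rewrite exprS mulN1r mulNr.
Qed.

Lemma bdA_map (F : T -> T) X g :
  pr (bdA (map F X)) g = pr (bdA X) (fun Z => g (map F Z)).
Proof.
rewrite /bdA size_map /pr !big_map; apply: eq_bigr => i _ /=.
congr (_ * g _); elim: X i => [|x X IH] [|i] //=; by rewrite IH.
Qed.

Variables F G : T -> T.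

Fixpoint Pr (X : seq T) : seq (seq T * int) :=
  match X with
  | [::] => [::]
  | x :: X' => (F x :: G x :: map G X', 1) ::
                 [seq (F x :: p.1, - p.2) | p <- Pr X']
  end.

Lemma Pr_cons x X : Pr (x :: X) = (F x :: G x :: map G X, 1) ::
                 [seq (F x :: p.1, - p.2) | p <- Pr X].
Proof. by []. Qed.

Lemma Pr_fst x X : map fst (Pr (x :: X)) =
  (F x :: G x :: map G X) :: map (cons (F x)) (map fst (Pr X)).
Proof. by rewrite Pr_cons map_cons -!map_comp. Qed.

Lemma pr_Pr_cons x X g :
  pr (Pr (x :: X)) g = g (F x :: G x :: map G X) - pr (Pr X) (fun Z => g (F x :: Z)).
Proof.
rewrite /= pr_cons mul1r; congr (_ + _).
rewrite /pr big_map -sumrN; apply: eq_bigr => p _ /=; by rewrite mulNr.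
Qed.

Lemma prism X g :
  pr (Pr X) (fun Z => pr (bdA Z) g) =
  g (map G X) - g (map F X) - pr (bdA X) (fun Z => pr (Pr Z) g).
Proof.
elim: X g => [|x X IH] g.
  by rewrite /= /bdA /= !pr_nil subrr subr0.
rewrite pr_Pr_cons pr_bdA_cons.
have -> : pr (Pr X) (fun Z => pr (bdA (F x :: Z)) g) =
   pr (Pr X) g - pr (Pr X) (fun Z => pr (bdA Z) (fun W => g (F x :: W))).
  by rewrite -pr_sub; apply: pr_fext => Z; rewrite pr_bdA_cons.
rewrite IH pr_bdA_cons bdA_map pr_bdA_cons.
have -> : pr (bdA X) (fun Z => pr (Pr (x :: Z)) g) =
   pr (bdA X) (fun Z => g (F x :: G x :: map G Z))
   - pr (bdA X) (fun Z => pr (Pr Z) (fun W => g (F x :: W))).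
  by rewrite -pr_sub; apply: pr_fext => Z; rewrite pr_Pr_cons.
rewrite /=.
ring.
Qed.
End ListLevel.

End G2.
Import G2.

Module G3.
Import GRing.Theory Num.Theory.

Section Conc.
Variable n : nat.
Variable d : Nn n.

Lemma big_gen_eval (A : {set 'I_n}) j :
  (\big[@mulN n/oneN n]_(i in A) gen i) j = (j \in A).
Proof.
rewrite (big_morph (fun x : Nn n => x j) (id1 := 0%N) (op1 := addn)); last first.
- by rewrite /oneN ffunE.
- by move=> x y; rewrite /mulN ffunE.
have [jA|jA] := boolP (j \in A).
  rewrite (bigD1 j) //= /gen ffunE eqxx big1 // => i /andP [_ ij].
  by rewrite ffunE eq_sym (negbTE ij).
rewrite big1 // => i iA; rewrite /gen ffunE; case: eqP => // ji.
by move: jA; rewrite ji iA.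
Qed.

Lemma inT_le1 (c : Nn n) : inT c -> forall i, c i <= 1.
Proof.
move=> /existsP [A /eqP ->] i; rewrite big_gen_eval; by case: (i \in A).
Qed.

Lemma inT_of (c : Nn n) : (forall i, c i <= 1) -> inT c.
Proof.
move=> H; apply/existsP; exists [set i | c i == 1]; apply/eqP/ffunP => i.
rewrite big_gen_eval inE; have := H i; case: (c i) => [|[|k]] //.
Qed.

Definition Cc := comma (incl (C:=FN n) (@inT n)) d.
Definition Obc := Ob Cc.
Definition okOb : pred Obc := @isOb Cc.
Definition fx (x : Obc) : Nn n := x.2.1.2.
Definition gx (x : Obc) : Nn n := x.2.2.
Definition mkOb (f g : Nn n) : Obc :=
  let c := [ffun i => d i - f i - g i] in (c, (c, d, f, g)).
Definition good (f g : Nn n) := [forall i, (f i + g i <= d i) && (d i <= f i + g i + 1)].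
Definition cm (x y : Obc) : Mor Cc :=
  ((x, y), (x.1, y.1, [ffun i => fx x i - fx y i], [ffun i => gx x i - gx y i])).
Definition leC (x y : Obc) := @isMor Cc (cm x y).

Lemma fx_mk f g : fx (mkOb f g) = f. Proof. by []. Qed.
Lemma gx_mk f g : gx (mkOb f g) = g. Proof. by []. Qed.

Lemma okOb_mk f g : okOb (mkOb f g) = good f g.
Proof.
rewrite /okOb /= /comma_isOb /= !eqxx !andbT /good.
apply/idP/idP.
- move=> /andP [cT /eqP E]; apply/forallP => i.
  have := inT_le1 cT i; move/ffunP: E => /(_ i); rewrite /mulN !ffunE => E.
  rewrite E /=; rewrite ?ffunE; move: (d i) (f i) (g i) => a b e; lia.
- move=> /forallP H; apply/andP; split.
    by apply: inT_of => i; rewrite ffunE; have := H i; move: (d i) (f i) (g i) => a b e; lia.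
  apply/eqP/ffunP => i; rewrite /mulN !ffunE; have := H i; case/andP; move: (d i) (f i) (g i) => a b c. lia.
Qed.

Lemma okOb_eq x : okOb x -> x = mkOb (fx x) (gx x) /\ good (fx x) (gx x).
Proof.
case: x => c [[[c' d'] f] g].
rewrite /okOb /= /comma_isOb /= => /and4P [ocT /eqP E /eqP ec /eqP ed].
have cT : inT c by move: ocT => /=; case: (inT c).
rewrite {}ec {}ed in E *.
have E' : forall i, d i = g i + c i + f i.
  by move=> i; move/ffunP: E => /(_ i); rewrite /mulN !ffunE.
have ceq : c = [ffun i => d i - f i - g i].
  apply/ffunP => i; rewrite ffunE E'; move: (g i) (c i) (f i) => a b e; lia.
split; first by rewrite /mkOb /fx /gx /= -ceq.
by rewrite -okOb_mk /mkOb /fx /gx /= -ceq /okOb /= /comma_isOb /= E !eqxx /= cT.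
Qed.

Definition fle (x y : Obc) := [forall i, (fx y i <= fx x i) && (gx y i <= gx x i)].

Lemma leC_mk f1 g1 f2 g2 : good f1 g1 -> good f2 g2 ->
  leC (mkOb f1 g1) (mkOb f2 g2) = fle (mkOb f1 g1) (mkOb f2 g2).
Proof.
move=> Hg1 Hg2.
have ok1 : comma_isOb (incl (C:=FN n) (@inT n)) d (mkOb f1 g1).
  by have := okOb_mk f1 g1; rewrite /okOb /= Hg1.
have ok2 : comma_isOb (incl (C:=FN n) (@inT n)) d (mkOb f2 g2).
  by have := okOb_mk f2 g2; rewrite /okOb /= Hg2.
move/forallP: Hg1 => G1; move/forallP: Hg2 => G2.
rewrite /leC /= /comma_isMor /= ok1 ok2 !eqxx /=.
have T1 : inT [ffun i => d i - f1 i - g1 i].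
  apply: inT_of => i; rewrite ffunE; have := G1 i;
  move: (d i) (f1 i) (g1 i) => a b e; lia.
have T2 : inT [ffun i => d i - f2 i - g2 i].
  apply: inT_of => i; rewrite ffunE; have := G2 i;
  move: (d i) (f2 i) (g2 i) => a b e; lia.
rewrite T1 T2 !xpair_eqE !eqxx /= !andbT.
apply/idP/idP.
- case/andP=> _ /andP [/eqP /ffunP Ef /eqP /ffunP Eg]; apply/forallP => i.
  move: (Ef i) (Eg i); rewrite /mulN /fx /gx /= !ffunE.
  move: (f1 i) (f2 i) (g1 i) (g2 i) => a b e h; lia.
- move=> /forallP H; apply/and3P; split.
  + apply/eqP/ffunP => i; rewrite /mulN !ffunE /fx /gx /=.
    have := H i; have := G1 i; have := G2 i; rewrite /fx /gx /=.
    move: (d i) (f1 i) (f2 i) (g1 i) (g2 i) => a b e h k; lia.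
  + apply/eqP/ffunP => i;
    rewrite /mulN !ffunE /fx /gx /=; have := H i; rewrite /fx /gx /=;
    move: (f1 i) (f2 i) => a b; lia.
  + apply/eqP/ffunP => i;
    rewrite /mulN !ffunE /fx /gx /=; have := H i; rewrite /fx /gx /=;
    move: (g1 i) (g2 i) => a b; lia.
Qed.

Lemma leC_okl x y : leC x y -> okOb x.
Proof. by case/andP. Qed.
Lemma leC_okr x y : leC x y -> okOb y.
Proof. by case/and3P. Qed.

Lemma leC_iff x y : okOb x -> okOb y -> leC x y = fle x y.
Proof.
move=> ox oy; have [ex gdx] := okOb_eq ox; have [ey gdy] := okOb_eq oy.
by rewrite ex ey leC_mk.
Qed.

Lemma leC_fle x y : leC x y -> fle x y.
Proof. by move=> H; rewrite -leC_iff ?(leC_okl H) ?(leC_okr H). Qed.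

Lemma comp_cm x y z : fle x y -> fle y z ->
  @Defs.comp Cc (cm y z) (cm x y) = cm x z.
Proof.
move=> /forallP H1 /forallP H2; rewrite /= /cm /=; congr (_, (_, _, _, _)).
- apply/ffunP => i; rewrite /mulN !ffunE; have := H1 i; have := H2 i.
  move: (fx x i) (fx y i) (fx z i) (gx x i) (gx y i) (gx z i) => a b e h k l; lia.
- apply/ffunP => i; rewrite /mulN !ffunE; have := H1 i; have := H2 i.
  move: (fx x i) (fx y i) (fx z i) (gx x i) (gx y i) (gx z i) => a b e h k l; lia.
Qed.

Lemma isMor_cm (m : Mor Cc) : @isMor Cc m -> m = cm m.1.1 m.1.2.
Proof.
case: m => [[[xc [[[xa xb] xf] xg]] [yc [[[ya yb] yf] yg]]] [[[s t] hf] hg]].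
rewrite /= /comma_isMor /= => /and5P [_ _ _ /eqP es /andP [/eqP et /eqP E]].
case: E => _ _ /ffunP Ef /ffunP Eg.
rewrite /cm /= es et; congr (_, (_, _, _, _)).
- apply/ffunP => i; have := Ef i; rewrite /mulN /fx /= !ffunE => <-.
  move: (hf i) (yf i) => a b; lia.
- apply/ffunP => i; have := Eg i; rewrite /mulN /gx /= !ffunE => <-.
  move: (hg i) (yg i) => a b; lia.
Qed.

Fixpoint mkms (x : Obc) (Y : seq Obc) : seq (Mor Cc) :=
  if Y is y :: Y' then cm x y :: mkms y Y' else [::].
Definition dflt : Obc := mkOb d d.
Definition mkS (X : seq Obc) : simplex Cc :=
  if X is x :: Y then (x, mkms x Y) else (dflt, [::]).
Definition objs (t : simplex Cc) : seq Obc := t.1 :: [seq m.1.2 | m <- t.2].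

Lemma size_mkms x Y : size (mkms x Y) = size Y.
Proof. by elim: Y x => //= y Y IH x; rewrite IH. Qed.

Lemma composable_mkms x Y : composable x (mkms x Y) = path leC x Y.
Proof. by elim: Y x => //= y Y IH x; rewrite eqxx IH. Qed.

Lemma objs_mkS x Y : objs (mkS (x :: Y)) = x :: Y.
Proof.
rewrite /objs /=; congr (_ :: _); elim: Y x => //= y Y IH x; by rewrite IH.
Qed.

Lemma composable_eq x ms : composable x ms ->
  ms = mkms x [seq m.1.2 | m <- ms] /\ path leC x [seq m.1.2 | m <- ms].
Proof.
elim: ms x => //= m ms IH x /and3P [mm /eqP sm cm'].
have [E P] := IH _ cm'.
have em := isMor_cm mm.
have hm : m = cm x m.1.2 by rewrite em -sm.
split; first by rewrite -E {1}hm.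
by rewrite P andbT -/(leC _ _) /leC -hm.
Qed.

Lemma face_succ i x y m ms : 0 < i ->
  @face Cc i.+1 (x, m :: ms) = (x, m :: (@face Cc i (y, ms)).2).
Proof.
case: i => [//|j] _; rewrite /face /=.
case: ifP => /eqP E.
  have -> : (j.+1 == size ms) = true by apply/eqP; move: E => /= [->].
  done.
have -> : (j.+1 == size ms) = false.
  by apply/negbTE/eqP => E'; apply: E; rewrite /= E'.
by case: (drop j ms) => [|a [|b r]].
Qed.

Lemma face_mk x Y i : path leC x Y -> Y != [::] -> i <= size Y ->
  face i (mkS (x :: Y)) = mkS (rem_at i (x :: Y)).
Proof.
elim: Y x i => [//|y Y IH] x i /andP [lxy pY] _.
case: i => [|[|j]] Hi; first done.
- case: Y IH pY Hi => [|y' Y'] IH pY Hi //=.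
  move: pY => /= /andP [lyy' _].
  by have := comp_cm (leC_fle lxy) (leC_fle lyy'); rewrite /= => ->.
  rewrite (_ : mkS (x :: y :: Y) = (x, cm x y :: mkms y Y)) // (@face_succ j.+1 x y) //.
  have Yn : Y != [::] by case: Y {IH pY} Hi.
  have := IH y j.+1 pY Yn Hi; rewrite [mkS (y :: Y)]/= => ->; done.
Qed.

Local Open Scope ring_scope.

Definition hat (g : simplex Cc -> int) (Z : seq Obc) : int :=
  if Z is [::] then 0 else g (mkS Z).
Definition mk' (X : seq Obc) : seq (simplex Cc * int) :=
  if X is [::] then [::] else [:: (mkS X, 1)].
Lemma pr_mk' X g : pr (mk' X) g = hat g X.
Proof. by case: X => [|x X]; rewrite /= ?pr_nil // pr_cons pr_nil addr0 mul1r. Qed.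

Definition bdS (t : simplex Cc) (g : simplex Cc -> int) : int :=
  if t.2 is [::] then 0
  else \sum_(i <- iota 0 (size t.2).+1) (-1) ^+ i * g (face i t).

Lemma pr_bd (c : chain Cc) g : pr (bd c) g = pr c (fun t => bdS t g).
Proof.
rewrite /pr /bd big_flatten /= big_map; apply: eq_bigr => p _.
have H : forall l : seq nat,
  \sum_(u <- [seq (@face Cc i p.1, (-1)^+i * p.2) | i <- l]) u.2 * g u.1
  = p.2 * \sum_(i <- l) (-1)^+i * g (@face Cc i p.1).
  move=> l; rewrite big_map mulr_sumr; apply: eq_bigr => i _ /=.
  by rewrite mulrA [p.2 * _]mulrC.
rewrite /bdS; case: (p.1.2) => [|m ms]; first by rewrite big_nil mulr0.
exact: (H (iota 0 (size (m :: ms)).+1)).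
Qed.

Lemma size_rem_at (T : Type) i (X : seq T) : (i < size X)%N ->
  size (rem_at i X) = (size X).-1.
Proof.
elim: X i => [//|x X IH] [|i] //= H; rewrite IH //; by case: X {IH} H.
Qed.

Lemma bdS_mk x Y g : path leC x Y ->
  bdS (mkS (x :: Y)) g = pr (bdA (x :: Y)) (hat g).
Proof.
move=> pY; case: Y pY => [|y Y] pY.
  by rewrite /bdS /= /bdA /= pr_cons pr_nil.
have -> : bdS (mkS [:: x, y & Y]) g =
  \sum_(i <- iota 0 (size Y).+2) (-1)^+i * g (face i (mkS [:: x, y & Y])).
  by rewrite /bdS size_mkms.
rewrite /bdA /pr big_map.
apply: eq_big_seq => i; rewrite mem_iota add0n => /andP [_ Hi].
rewrite (face_mk pY) //.
have : size (rem_at i [:: x, y & Y]) = (size Y).+1 by rewrite size_rem_at.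
by case: (rem_at i _).
Qed.

Definition push (H : Obc -> Obc) (z : chain Cc) : chain Cc :=
  Lin (fun t => mk' (map H (objs t))) z.

Definition realP (F G : Obc -> Obc) (z : chain Cc) : chain Cc :=
  Lin (fun t => Lin mk' (Pr F G (objs t))) z.

Lemma simplex_objs q (t : simplex Cc) : is_simplex q t ->
  exists Y, [/\ objs t = t.1 :: Y, t = mkS (t.1 :: Y), okOb t.1,
     path leC t.1 Y & size Y = q].
Proof.
case: t => x ms /and3P [ox /eqP sz cp] /=.
have [E P] := composable_eq cp.
exists [seq m.1.2 | m <- ms]; split => //.
- by rewrite /mkS -E.
- by rewrite size_map.
Qed.

Lemma path_mapH (H : Obc -> Obc) x Y :
  (forall x y, leC x y -> leC (H x) (H y)) -> path leC x Y -> path leC (H x) (map H Y).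
Proof.
move=> mH; elim: Y x => //= y Y IH x /andP [l p]; by rewrite mH // IH.
Qed.

Section Homotopy.
Variables F G : Obc -> Obc.
Hypothesis mF : forall x y, leC x y -> leC (F x) (F y).
Hypothesis mG : forall x y, leC x y -> leC (G x) (G y).
Hypothesis FG : forall x, okOb x -> leC (F x) (G x).

Lemma Pr_valid x Y : okOb x -> path leC x Y ->
  forall Z, Z \in map fst (Pr F G (x :: Y)) ->
  exists Z', [/\ Z = F x :: Z', path leC (F x) Z' & size Z' = (size Y).+1].
Proof.
elim: Y x => [|y Y IH] x ox pY Z.
  rewrite /= inE => /eqP ->; exists [:: G x]; split => //=.
  by rewrite FG.
rewrite Pr_fst in_cons => /orP [/eqP ->| /mapP [W WP ->]].
  exists (G x :: G y :: map G Y); split => //=; last by rewrite size_map.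
  rewrite FG //=; move: pY => /= /andP [lxy pY].
  by rewrite mG //= path_mapH.
move: pY => /= /andP [lxy pY].
have [W' [EW pW sW]] := IH y (leC_okr lxy) pY W WP.
exists W; rewrite EW; split => //=; [by rewrite mF | by rewrite sW].
Qed.

Lemma realP_chain q (z : chain Cc) : is_chain q z -> is_chain q.+1 (realP F G z).
Proof.
move=> zc; apply: all_Lin => p pz; apply: all_Lin => u uP.
have tq : is_simplex q p.1 by move/allP: zc; apply; apply: map_f.
have [Y [Eo Et ox pY sY]] := simplex_objs tq.
rewrite Eo in uP.
have [Z' [EZ pZ sZ]] := Pr_valid ox pY (map_f fst uP).
rewrite EZ /= andbT /is_simplex /= size_mkms sZ sY eqxx composable_mkms pZ /=.
by rewrite andbT; exact: (leC_okl (FG ox)).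
Qed.

Lemma realP_bd q (z : chain Cc) :
  is_chain q z -> (forall s, coef (bd z) s = 0) ->
  forall g, pr (bd (realP F G z)) g = pr (push G z) g - pr (push F z) g.
Proof.
move=> zc cyc g.
rewrite pr_bd /realP pr_Lin /push !pr_Lin -!pr_sub.
(* the P(bd z) term vanishes *)
pose k (u : simplex Cc) := pr (Pr F G (objs u)) (hat g).
have Hk : forall Z, hat k Z = pr (Pr F G Z) (hat g).
  case=> [|x Y]; first by rewrite /= pr_nil. change (k (mkS (x :: Y)) = pr (Pr F G (x :: Y)) (hat g)); by rewrite /k objs_mkS.
have Z0 : pr (bd z) k = 0.
  rewrite (@pr_equiv _ (bd z) [::]) ?pr_nil // => s.
  by have := cyc s; rewrite /coef => ->; rewrite big_nil.
rewrite pr_bd in Z0.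
rewrite -[X in _ = X]subr0 -Z0 -pr_sub.
apply: pr_ext => p pz.
have tq : is_simplex q p.1 by move/allP: zc; apply; apply: map_f.
have [Y [Eo Et ox pY sY]] := simplex_objs tq.
rewrite pr_Lin !pr_mk' Eo (_ : bdS p.1 k = bdS (mkS (p.1.1 :: Y)) k); last by rewrite -Et.
rewrite bdS_mk //.
rewrite (@pr_ext _ _ _ (fun Z => pr (bdA Z) (hat g))); last first.
  move=> u uP; rewrite pr_mk'.
  have [Z' [EZ pZ sZ]] := Pr_valid ox pY (map_f fst uP).
  by rewrite EZ /= bdS_mk.
rewrite prism.
rewrite (pr_fext _ Hk).
by [].
Qed.
End Homotopy.
End Conc.

End G3.
Import G3.

Module G4.


Definition aF k f := if f < k then f else k.
Definition aG k f g D := if f < k then g else D - k.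
Definition bF k f := if f <= k then f else k.
Definition bG k f g D := if f <= k then g else D - 1 - k.
Definition gd f g D := (f + g <= D) && (D <= f + g + 1).

Ltac cs := rewrite /aF /aG /bF /bG /gd;
  repeat match goal with |- context [if ?b then _ else _] => case: b end.

Lemma gdA k f g D : gd f g D -> gd (aF k f) (aG k f g D) D.
Proof. rewrite /aF /aG /gd; case: (ltnP f k) ; intros; repeat match goal with H : is_true (_ && _) |- _ => case/andP: H; intros end; try (apply/andP; split); lia. Qed.
Lemma gdB k f g D : gd f g D -> gd (bF k f) (bG k f g D) D.
Proof. rewrite /bF /bG /gd; case: (leqP f k) ; intros; repeat match goal with H : is_true (_ && _) |- _ => case/andP: H; intros end; try (apply/andP; split); lia. Qed.
Lemma monoA k f1 g1 f2 g2 D : gd f1 g1 D -> gd f2 g2 D -> f2 <= f1 -> g2 <= g1 ->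
  (aF k f2 <= aF k f1) && (aG k f2 g2 D <= aG k f1 g1 D).
Proof. rewrite /aF /aG /gd; case: (ltnP f1 k); case: (ltnP f2 k) ; intros; repeat match goal with H : is_true (_ && _) |- _ => case/andP: H; intros end; try (apply/andP; split); lia. Qed.
Lemma monoB k f1 g1 f2 g2 D : gd f1 g1 D -> gd f2 g2 D -> f2 <= f1 -> g2 <= g1 ->
  (bF k f2 <= bF k f1) && (bG k f2 g2 D <= bG k f1 g1 D).
Proof. rewrite /bF /bG /gd; case: (leqP f1 k); case: (leqP f2 k) ; intros; repeat match goal with H : is_true (_ && _) |- _ => case/andP: H; intros end; try (apply/andP; split); lia. Qed.
Lemma AB k f g D : gd f g D -> (bF k f <= aF k f) && (bG k f g D <= aG k f g D).
Proof. rewrite /aF /aG /bF /bG /gd; case: (ltnP f k); case: (leqP f k) ; intros; repeat match goal with H : is_true (_ && _) |- _ => case/andP: H; intros end; try (apply/andP; split); lia. Qed.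
Lemma AB1 k f g D : gd f g D -> (bF k f <= aF k.+1 f) && (bG k f g D <= aG k.+1 f g D).
Proof. rewrite /aF /aG /bF /bG /gd; case: (ltnP f k.+1); case: (leqP f k) ; intros; repeat match goal with H : is_true (_ && _) |- _ => case/andP: H; intros end; try (apply/andP; split); lia. Qed.
Lemma AK K f g D : f <= D -> D < K -> aF K f = f /\ aG K f g D = g.
Proof. rewrite /aF /aG => *; case: ltnP ; intros; split; lia. Qed.

Section Maps.
Variable n : nat.
Variable d : Nn n.

Definition Ak k (x : Obc d) : Obc d :=
  mkOb d [ffun i => aF k (fx x i)] [ffun i => aG k (fx x i) (gx x i) (d i)].
Definition Bk k (x : Obc d) : Obc d :=
  mkOb d [ffun i => bF k (fx x i)] [ffun i => bG k (fx x i) (gx x i) (d i)].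

Lemma ok_gd (x : Obc d) : okOb x -> forall i, gd (fx x i) (gx x i) (d i).
Proof. by move=> ox; have [_ /forallP H] := okOb_eq ox. Qed.

Lemma okA k x : okOb x -> okOb (Ak k x).
Proof.
move=> ox; rewrite /Ak okOb_mk; apply/forallP => i; rewrite !ffunE.
exact: gdA (ok_gd ox i).
Qed.
Lemma okB k x : okOb x -> okOb (Bk k x).
Proof.
move=> ox; rewrite /Bk okOb_mk; apply/forallP => i; rewrite !ffunE.
exact: gdB (ok_gd ox i).
Qed.

Lemma gd_good (f g : Nn n) : (forall i, gd (f i) (g i) (d i)) -> good d f g.
Proof. by move=> H; apply/forallP. Qed.

Lemma monA k x y : leC x y -> leC (Ak k x) (Ak k y).
Proof.
move=> l; have ox := leC_okl l; have oy := leC_okr l.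
have /forallP F := leC_fle l.
rewrite /Ak leC_mk; try (apply: gd_good => i; rewrite !ffunE; apply: gdA; exact: ok_gd).
apply/forallP => i; rewrite /fx /gx /= !ffunE.
have /andP [h1 h2] := F i.
exact: monoA (ok_gd ox i) (ok_gd oy i) h1 h2.
Qed.
Lemma monB k x y : leC x y -> leC (Bk k x) (Bk k y).
Proof.
move=> l; have ox := leC_okl l; have oy := leC_okr l.
have /forallP F := leC_fle l.
rewrite /Bk leC_mk; try (apply: gd_good => i; rewrite !ffunE; apply: gdB; exact: ok_gd).
apply/forallP => i; rewrite /fx /gx /= !ffunE.
have /andP [h1 h2] := F i.
exact: monoB (ok_gd ox i) (ok_gd oy i) h1 h2.
Qed.
Lemma leAB k x : okOb x -> leC (Ak k x) (Bk k x).
Proof.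
move=> ox; rewrite /Ak /Bk leC_mk;
  try (apply: gd_good => i; rewrite !ffunE; first [apply: gdA | apply: gdB]; exact: ok_gd).
apply/forallP => i; rewrite /fx /gx /= !ffunE; exact: AB (ok_gd ox i).
Qed.
Lemma leAB1 k x : okOb x -> leC (Ak k.+1 x) (Bk k x).
Proof.
move=> ox; rewrite /Ak /Bk leC_mk;
  try (apply: gd_good => i; rewrite !ffunE; first [apply: gdA | apply: gdB]; exact: ok_gd).
apply/forallP => i; rewrite /fx /gx /= !ffunE; exact: AB1 (ok_gd ox i).
Qed.

Definition bigK := (\sum_(i < n) d i).+1.

Lemma AKid x : okOb x -> Ak bigK x = x.
Proof.
move=> ox; have [ex _] := okOb_eq ox.
rewrite [RHS]ex /Ak; congr (mkOb d _ _); apply/ffunP => i; rewrite ffunE;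
  have /andP [h1 _] := ok_gd ox i;
  (have hf : fx x i <= d i by move: h1; move: (fx x i) (gx x i) (d i) => a b c; lia);
  (have hK : d i < bigK by rewrite /bigK ltnS (bigD1 i) //= leq_addr);
  by case: (@AK bigK (fx x i) (gx x i) (d i) hf hK).
Qed.

Definition p0 : Obc d := mkOb d [ffun => 0] d.
Lemma A0 x : Ak 0 x = p0.
Proof.
rewrite /Ak /p0; congr (mkOb d _ _); apply/ffunP => i; rewrite !ffunE /aF /aG //=.
by rewrite subn0.
Qed.
Lemma okp0 : okOb p0.
Proof. rewrite /p0 okOb_mk; apply/forallP => i; rewrite ffunE add0n leqnn; lia. Qed.
End Maps.

End G4.
Import G4.

Module G5.
Import GRing.Theory Num.Theory.
Local Open Scope ring_scope.

Lemma sum_alt m : (\sum_(i <- iota 0 m) (-1) ^+ i = (odd m)%:R :> int)%R.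
Proof.
elim: m => [|m IH]; first by rewrite big_nil.
rewrite -addn1 iotaD big_cat big_seq1 IH add0n addn1 /= -signr_odd.
by case: (odd m) => /=; rewrite ?expr1 ?expr0 ?addrN ?add0r.
Qed.

Lemma rem_at_nseq (T : Type) (a : T) m i : (i < m.+1)%N -> rem_at i (nseq m.+1 a) = nseq m a.
Proof.
elim: m i => [|m IH] [|i] //= H; by rewrite IH.
Qed.

Lemma pr_const (A : Type) (c : seq (A * int)) (a : int) :
  pr c (fun _ => a) = pr c (fun _ => 1) * a.
Proof. rewrite /pr mulr_suml; apply: eq_bigr => p _; by rewrite mulr1. Qed.

Lemma map_constE (A B : Type) (a : B) (s : seq A) : map (fun _ => a) s = nseq (size s) a.
Proof. by elim: s => //= x s ->. Qed.

Section Final.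
Variable n : nat.
Variable d : Nn n.

Lemma path_ok (x : Obc d) Y : path (@leC n d) x Y -> all (@okOb n d) Y.
Proof. elim: Y x => //= y Y IH x /andP [l p]; by rewrite (leC_okr l) (IH y). Qed.

Lemma leC_refl (x : Obc d) : okOb x -> leC x x.
Proof. move=> ox; rewrite leC_iff //; apply/forallP => i; by rewrite !leqnn. Qed.

Lemma path_p0 m : path (@leC n d) (p0 d) (nseq m (p0 d)).
Proof. elim: m => //= m ->; by rewrite leC_refl // okp0. Qed.

Lemma connected_C : connected (Cc d).
Proof.
pose R := (fun a b : Ob (Cc d) => exists m, [/\ @isMor (Cc d) m, @src (Cc d) m = a & @tgt (Cc d) m = b]).
have RL : forall a b : Obc d, leC a b -> clos_refl_sym_trans (Ob (Cc d)) R a b.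
  move=> a b l; apply: rst_step; exists (cm a b); split => //.
have Hk : forall k (x : Obc d), okOb x -> clos_refl_sym_trans (Ob (Cc d)) R (Ak k x) (p0 d).
  move=> k x ox; elim: k => [|k IH]; first by rewrite A0; apply: rst_refl.
  apply: rst_trans (RL _ _ (leAB1 k ox)) _.
  apply: rst_trans (rst_sym _ _ _ _ (RL _ _ (leAB k ox))) IH.
split; first by exists (p0 d); exact: okp0.
move=> x y ox oy.
apply: (rst_trans _ _ _ (p0 d)); last by rewrite -(AKid oy); exact: (rst_sym _ _ _ _ (Hk (bigK d) y oy)).
by rewrite -{1}(AKid ox); apply: Hk.
Qed.


Lemma fst_negC (A : Type) (c : seq (A * int)) : map fst (negC c) = map fst c.
Proof. by rewrite /negC -map_comp. Qed.

Lemma vanish q : (0 < q)%N -> colim_derived_const_Z_vanishes (Cc d) q.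
Proof.
move=> q0 z zc cyc.
have step : forall k, exists b, is_chain q.+1 b /\
   forall g, pr (push (Ak k) z) g = pr (push (Ak 0) z) g + pr (bd b) g.
  elim => [|k [b [bc Hb]]].
    by exists [::]; split => // g; rewrite /bd /= pr_nil addr0.
  exists (b ++ realP (Ak k) (Bk k) z ++ negC (realP (Ak k.+1) (Bk k) z)); split.
    rewrite /is_chain !map_cat !all_cat fst_negC.
    rewrite -/(is_chain _ _) bc -!/(is_chain _ _).
    rewrite (realP_chain (@monA n d k) (@monB n d k) (@leAB n d k) zc).
    by rewrite (realP_chain (@monA n d k.+1) (@monB n d k) (@leAB1 n d k) zc).
  move=> g; rewrite pr_bd !pr_cat pr_neg -!pr_bd.
  rewrite (realP_bd (@monA n d k) (@monB n d k) (@leAB n d k) zc cyc).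
  rewrite (realP_bd (@monA n d k.+1) (@monB n d k) (@leAB1 n d k) zc cyc) Hb.
  ring.
have [b [bc Hb]] := step (bigK d).
pose w := pr z (fun _ => 1).
pose dq : simplex (Cc d) := mkS (nseq q.+1 (p0 d)).
pose dq1 : simplex (Cc d) := mkS (nseq q.+2 (p0 d)).
have valid : forall p, p \in z -> exists Y, [/\ objs p.1 = p.1.1 :: Y, p.1 = mkS (p.1.1 :: Y),
     okOb p.1.1, path (@leC n d) p.1.1 Y & size Y = q].
  move=> p pz; apply: simplex_objs; move/allP: zc; apply; exact: map_f.
have HK : forall g, pr (push (Ak (bigK d)) z) g = pr z g.
  move=> g; rewrite /push pr_Lin; apply: pr_ext => p pz.
  have [Y [Eo Et ox pY sY]] := valid p pz.
  rewrite pr_mk' Eo map_id_in; first by change (g (mkS (p.1.1 :: Y)) = g p.1); rewrite -Et.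
  move=> u; rewrite in_cons => /orP [/eqP ->|uY]; first exact: AKid.
  by apply: AKid; move/allP: (path_ok pY); apply.
have H0 : forall g, pr (push (Ak 0) z) g = w * g dq.
  move=> g; rewrite /push pr_Lin /w -pr_const; apply: pr_ext => p pz.
  have [Y [Eo Et ox pY sY]] := valid p pz.
  rewrite pr_mk' Eo (eq_map (@A0 n d)) map_constE /= sY.
  by [].
have Hw : w * (odd q.+1)%:R = 0.
  have Z0 : pr (bd z) (fun _ => 1) = 0.
    rewrite (@pr_equiv _ (bd z) [::]) ?pr_nil // => s.
    by have := cyc s; rewrite /coef => ->; rewrite big_nil.
  rewrite -Z0 pr_bd /w -pr_const; apply: pr_ext => p pz.
  have [Y [Eo Et ox pY sY]] := valid p pz.
  rewrite Et /bdS /= size_mkms.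
  case: Y Eo Et pY sY => [|y Y] Eo Et pY sY; first by rewrite -sY in q0.
  have -> : (~~ odd q)%:R = (odd (size (y :: Y)).+1)%:R :> int by rewrite sY.
  rewrite -sum_alt /=.
  by apply: eq_bigr => i _; rewrite mulr1.
have Hd : forall g, pr (bd [:: (dq1, w)]) g = w * ((odd q.+2)%:R * g dq).
  move=> g; rewrite pr_bd pr_cons pr_nil addr0 /=.
  rewrite /dq1 [nseq _ _]/= bdS_mk; last exact: (path_p0 q.+1).
  congr (_ * _).
  have -> : (~~ ~~ odd q)%:R = (odd (size (nseq q.+2 (p0 d))))%:R :> int.
    by rewrite size_nseq /= negbK.
  rewrite /bdA /pr big_map -sum_alt mulr_suml; apply: eq_big_seq => i.
  rewrite mem_iota add0n => /andP [_ Hi].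
  rewrite (@rem_at_nseq _ (p0 d) q.+1 i) ?mul1r //.
  by move: Hi; rewrite /= size_nseq.
exists (b ++ [:: (dq1, w)]); split.
  rewrite /is_chain map_cat all_cat -/(is_chain _ _) bc (_ : map fst [:: (dq1, w)] = [:: dq1]) // all_seq1.
  apply/andP; split => //; apply/and3P; split.
  - exact: okp0.
  - change (size (mkms (p0 d) (nseq q.+1 (p0 d))) == q.+1).
    by rewrite size_mkms size_nseq.
  - change (composable (p0 d) (mkms (p0 d) (nseq q.+1 (p0 d)))).
    by rewrite composable_mkms path_p0.
move=> s; rewrite /coef !pr_coef pr_bd pr_cat -!pr_bd Hd -HK Hb H0.
case Oq : (odd q).
  by rewrite /= Oq /= mul1r; ring.
move: Hw; rewrite /= Oq /= mulr1 => ->; ring.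
Qed.
End Final.

End G5.
Import G5.

Theorem mainTheorem15 (n : nat) : strong_coinitial (incl (C:=FN n) (@inT n)).
Proof.
move=> d _; split; first exact: connected_C.
by move=> q q0; exact: vanish.
Qed.
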